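(* Let $G=\langle A,B\rangle$ be an abstract rank one group with unipotent subgroups $A,B$ and $V$ a $\mathbb{Z}G$-module with $[V,A,A,A]=0$, $[V,G,G,G]\neq0$, $[V,G]=V$ and $C_V(G)=0$, and suppose $A_0:=C_A([V,A])\cap C_A(V/C_V(A))\neq1$. Let $B_0=\{1\}\cup\{b(a):a\in A_0\setminus\{1\}\}$ and $G_0=\langle A_0,B_0\rangle$. Then (a) $[V,A]\cap[V,B]=C_V(G_0)$; (b) $[V,A]=C_V(A)\oplus C_V(G_0)$.
   Context: $G$ acts on $V$ on the right, $[v,g]=-v+vg$; $[X,Y]$ is the subgroup generated by all such commutators, $[X,Y,Z]=[[X,Y],Z]$. Abstract rank one group with unipotent subgroups $A,B$: $G=\langle A,B\rangle$, $A\neq B$ nilpotent, for each $a\in A\setminus\{1\}$ there is $b(a)\in B\setminus\{1\}$ with $B^a=A^{b(a)}$, and for each $b\in B\setminus\{1\}$ some $a(b)\in A\setminus\{1\}$ with $A^b=B^{a(b)}$. ($B_0$ is a subgroup of $B$ and $G_0$ is a rank one group with unipotent subgroups $A_0,B_0$.) *)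

(* Defs.v *)
(* Abstract (possibly infinite) groups are modelled with
   MathComp's [groupType] (boot/monoid.v); subsets/subgroups are Prop-valued
   predicates; the ZG-module V is a [zmodType] with a right action. *)
From HB Require Import structures.
From mathcomp Require Import all_boot ssralg.
Set Implicit Arguments. Unset Strict Implicit. Unset Printing Implicit Defensive.
Import GRing.Theory.

Section GroupDefs.
Variable gT : groupType.
Local Open Scope group_scope.

Definition set_eq (T : Type) (X Y : T -> Prop) := forall x, X x <-> Y x.

Definition is_subgroup (H : gT -> Prop) :=
  [/\ H 1, (forall x y, H x -> H y -> H (x * y)) & (forall x, H x -> H x^-1)].

Definition gen (S : gT -> Prop) : gT -> Prop :=
  fun x => forall H, is_subgroup H -> (forall s, S s -> H s) -> H x.

Definition commg_sub (H K : gT -> Prop) : gT -> Prop :=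
  gen (fun z => exists x y, [/\ H x, K y & z = [~ x, y]]).

Fixpoint lcs (H : gT -> Prop) (n : nat) : gT -> Prop :=
  match n with 0 => H | n'.+1 => commg_sub (lcs H n') H end.

Definition nilpotent_grp (H : gT -> Prop) :=
  exists n, forall x, lcs H n x -> x = 1.

Definition conj_set (H : gT -> Prop) (g : gT) : gT -> Prop :=
  fun x => exists2 h, H h & x = h ^ g.

(* Abstract rank one group G = <A,B> (G is the whole type gT) with unipotent
   subgroups A, B; [b] is a choice of the elements b(a) of the definition. *)
Definition rank_one (A B : gT -> Prop) (b : gT -> gT) :=
  [/\ is_subgroup A /\ is_subgroup B,
      set_eq (gen (fun x => A x \/ B x)) (fun _ => True),
      ~ set_eq A B /\ nilpotent_grp A /\ nilpotent_grp B,
      (forall a, A a -> a <> 1 ->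
         [/\ B (b a), b a <> 1 & set_eq (conj_set B a) (conj_set A (b a))]) &
      (forall y, B y -> y <> 1 ->
         exists a, [/\ A a, a <> 1 & set_eq (conj_set A y) (conj_set B a)])].
End GroupDefs.

Section ModuleDefs.
Variables (gT : groupType) (V : zmodType) (act : V -> gT -> V).
Local Open Scope ring_scope.

Definition is_module :=
  [/\ (forall v, act v 1%g = v),
      (forall v g h, act v (g * h)%g = act (act v g) h) &
      (forall v w g, act (v + w) g = act v g + act w g)].

Definition vcomm (v : V) (g : gT) : V := - v + act v g.

Definition is_addsub (W : V -> Prop) :=
  W 0 /\ (forall x y, W x -> W y -> W (x - y)).

Definition vgen (S : V -> Prop) : V -> Prop :=
  fun x => forall W, is_addsub W -> (forall s, S s -> W s) -> W x.

Definition VComm (X : V -> Prop) (Y : gT -> Prop) : V -> Prop :=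
  vgen (fun z => exists v g, [/\ X v, Y g & z = vcomm v g]).

Definition centV (Y : gT -> Prop) : V -> Prop :=
  fun v => forall g, Y g -> act v g = v.

Definition centG (Y : gT -> Prop) (X : V -> Prop) : gT -> Prop :=
  fun g => Y g /\ (forall x, X x -> act x g = x).

(* C_Y(V/W) : elements of Y acting trivially on V/W *)
Definition centG_quo (Y : gT -> Prop) (W : V -> Prop) : gT -> Prop :=
  fun g => Y g /\ (forall v, W (vcomm v g)).

Definition allV : V -> Prop := fun _ => True.
Definition is_zero (X : V -> Prop) := forall x, X x -> x = 0.
End ModuleDefs.
Arguments allV V : clear implicits.

(* Main.v *)
Require Import Defs.
From HB Require Import structures.
From mathcomp Require Import all_boot ssralg.
Import GRing.Theory.

Section Helpers.
Set Implicit Arguments. Unset Strict Implicit.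
Local Open Scope ring_scope.
Local Open Scope group_scope.
Lemma act0 (gT : groupType) (V : zmodType) (act : V -> gT -> V) :
  is_module act -> forall g, act 0%R g = 0%R.
Proof. case=> _ _ HD g. by apply: (addrI (act 0%R g)); rewrite addr0 -HD addr0. Qed.

Lemma actN (gT : groupType) (V : zmodType) (act : V -> gT -> V) :
  is_module act -> forall v g, act (- v)%R g = (- act v g)%R.
Proof.
move=> Hm v g; case: (Hm) => _ _ HD.
by apply: (addrI (act v g)); rewrite -HD !subrr (act0 Hm).
Qed.

Lemma actB (gT : groupType) (V : zmodType) (act : V -> gT -> V) :
  is_module act -> forall v w g, act (v - w)%R g = (act v g - act w g)%R.
Proof. move=> Hm v w g; case: (Hm) => _ _ HD. by rewrite HD (actN Hm). Qed.

Lemma actVK (gT : groupType) (V : zmodType) (act : V -> gT -> V) :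
  is_module act -> forall v g, act (act v g^-1) g = v.
Proof. case=> H1 HM _ v g. by rewrite -HM mulVg H1. Qed.

Lemma actKV (gT : groupType) (V : zmodType) (act : V -> gT -> V) :
  is_module act -> forall v g, act (act v g) g^-1 = v.
Proof. case=> H1 HM _ v g. by rewrite -HM mulgV H1. Qed.

Lemma act_conj (gT : groupType) (V : zmodType) (act : V -> gT -> V) :
  is_module act -> forall w g x, act (act w g) (x ^ g) = act (act w x) g.
Proof. case=> H1 HM _ w g x. by rewrite -!HM -conjgC. Qed.

Lemma vcommE (gT : groupType) (V : zmodType) (act : V -> gT -> V) v g :
  act v g = (v + vcomm act v g)%R.
Proof. by rewrite /vcomm addNKr. Qed.

Lemma vcomm_conj (gT : groupType) (V : zmodType) (act : V -> gT -> V) :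
  is_module act -> forall w g x, vcomm act (act w g) (x ^ g) = act (vcomm act w x) g.
Proof.
move=> Hm w g x; case: (Hm) => _ _ HD.
by rewrite /vcomm (act_conj Hm) HD (actN Hm).
Qed.

Lemma gen_sub (gT : groupType) (S : gT -> Prop) x : S x -> gen S x.
Proof. by move=> Sx H _ HS; apply: HS. Qed.

Lemma stab_subgroup (gT : groupType) (V : zmodType) (act : V -> gT -> V) :
  is_module act -> forall v, is_subgroup (fun g => act v g = v).
Proof.
case=> H1 HM _ v; split => //.
- by move=> x y Hx Hy; rewrite HM Hx Hy.
- by move=> x Hx; rewrite -{1}Hx -HM mulgV H1.
Qed.

Lemma vgen_addsub (V : zmodType) (S : V -> Prop) : is_addsub (vgen S).
Proof.
split; first by move=> W [W0 _] _.
by move=> x y Hx Hy W HW HS; case: (HW) => _ HB; apply: HB; [apply: Hx | apply: Hy].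
Qed.

Lemma vgen_gen (V : zmodType) (S : V -> Prop) s : S s -> vgen S s.
Proof. by move=> Ss W _ HS; apply: HS. Qed.

Lemma addsubD (V : zmodType) (W : V -> Prop) x y :
  is_addsub W -> W x -> W y -> W (x + y)%R.
Proof.
case=> W0 WB Wx Wy. have := WB x (0 - y)%R Wx (WB _ _ W0 Wy).
by rewrite sub0r opprK.
Qed.

Lemma addsubN (V : zmodType) (W : V -> Prop) x :
  is_addsub W -> W x -> W (- x)%R.
Proof. case=> W0 WB Wx. by have := WB _ _ W0 Wx; rewrite sub0r. Qed.

Lemma VComm_gen (gT : groupType) (V : zmodType) (act : V -> gT -> V) X Y v g :
  X v -> Y g -> VComm act X Y (vcomm act v g).
Proof. by move=> Xv Yg; apply: vgen_gen; exists v, g. Qed.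

Lemma centV_addsub (gT : groupType) (V : zmodType) (act : V -> gT -> V) Y :
  is_module act -> is_addsub (centV act Y).
Proof.
move=> Hm; split; first by move=> g _; rewrite (act0 Hm).
by move=> x y Hx Hy g Yg; rewrite (actB Hm) Hx ?Hy.
Qed.

Lemma transport (gT : groupType) (V : zmodType) (act : V -> gT -> V) :
  is_module act -> forall (H K : gT -> Prop) (g h : gT),
  (forall x, H x -> exists2 y, K y & x ^ g = y ^ h) ->
  forall z, VComm act (allV V) H z ->
  exists2 w, VComm act (allV V) K w & act z g = act w h.
Proof.
move=> Hm H K g h HK z Hz.
apply: (Hz (fun z => exists2 w, VComm act (allV V) K w & act z g = act w h)).
- split; first by exists 0%R; [exact: (proj1 (vgen_addsub _)) | rewrite !(act0 Hm)].
  move=> x y [wx Hwx ex] [wy Hwy ey]; exists (wx - wy)%R.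
    exact: (proj2 (vgen_addsub _)) _ _ Hwx Hwy.
  by rewrite !(actB Hm) ex ey.
- move=> s [v [x [_ Hx ->]]]; case: (HK x Hx) => y Ky exy.
  exists (vcomm act (act (act v g) h^-1) y); first exact: VComm_gen.
  by rewrite -[RHS](vcomm_conj Hm) (actVK Hm) -exy (vcomm_conj Hm).
Qed.
Lemma fixJ (gT : groupType) (V : zmodType) (act : V -> gT -> V) :
  is_module act -> forall v x y, act v x = v -> act v y = v -> act v (x ^ y) = v.
Proof.
move=> Hm v x y Hx Hy; move: (stab_subgroup Hm v); rewrite /is_subgroup => -[_ HM HV].
by rewrite /conjg; apply: (HM); [apply: HV | apply: (HM)].
Qed.

Lemma fixV (gT : groupType) (V : zmodType) (act : V -> gT -> V) :
  is_module act -> forall v x, act v x = v -> act v x^-1 = v.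
Proof. move=> Hm v x Hx; move: (stab_subgroup Hm v); rewrite /is_subgroup => -[_ _ HV]; exact: HV. Qed.

Lemma rearr (V : zmodType) (u v w : V) : (u + v - w = v + (u - w))%R.
Proof. by rewrite addrCA addrA. Qed.

Lemma key (gT : groupType) (V : zmodType) (act : V -> gT -> V)
    (A B : gT -> Prop) (b : gT -> gT) :
  rank_one A B b -> is_module act ->
  is_zero (VComm act (VComm act (VComm act (allV V) A) A) A) ->
  set_eq (VComm act (allV V) (fun _ => True)) (allV V) ->
  is_zero (centV act (fun _ => True)) ->
  forall a, A a -> a <> 1 ->
  (forall x, VComm act (allV V) A x -> act x a = x) ->
  (forall v, centV act A (vcomm act v a)) ->
  [/\ (forall v, VComm act (allV V) A v -> VComm act (allV V) B v -> act v (b a) = v),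
      (forall v, act v a = v -> act v (b a) = v ->
          VComm act (allV V) A v /\ VComm act (allV V) B v),
      (forall w, centV act A w -> VComm act (allV V) A w),
      (forall x, VComm act (allV V) A x -> exists c y,
          [/\ centV act A c, VComm act (allV V) B y & x = (c + y)%R]) &
      (forall v, centV act A v -> act v (b a) = v -> v = 0%R)].
Proof.
case=> [[HA HB] Hgen [_ _] Hab Hba] Hm Hcub HVG Hcent a Aa a1 HaX HaQ.
set X := VComm act (allV V) A; set Y := VComm act (allV V) B.
set CA := centV act A; set CB := centV act B.
have H1 : forall v, act v 1 = v by case: Hm.
have XB : is_addsub X by apply: vgen_addsub.
have YB : is_addsub Y by apply: vgen_addsub.
have fixall : forall v, (forall g, A g -> act v g = v) ->
    (forall g, B g -> act v g = v) -> v = 0%R.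
  move=> v HvA HvB; apply: Hcent => g _.
  apply: (proj2 (Hgen g) I (fun g => act v g = v)); first exact: stab_subgroup Hm v.
  by move=> s [/HvA|/HvB].
case: (Hab a Aa a1) => Bb b1 Hconj.
set bb := b a in Bb b1 Hconj *.
have G1 : forall v, act v a = v -> (forall g, B g -> act v g = v) -> v = 0%R.
  move=> v va vB; apply: fixall => // al Al.
  have : conj_set A bb (al ^ bb) by exists al.
  move/(proj2 (Hconj _)) => [y By ey].
  rewrite -(conjgK bb al) ey.
  by apply: (fixJ Hm); [apply: (fixJ Hm) => //; apply: vB | apply: (fixV Hm); apply: vB].
have G2 : forall y0, B y0 -> y0 <> 1 -> forall v, act v y0 = v ->
    (forall g, A g -> act v g = v) -> v = 0%R.
  move=> y0 By0 y01 v vy0 vA.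
  case: (Hba y0 By0 y01) => a' [Aa' _ Hc'].
  apply: fixall => // y By.
  have : conj_set B a' (y ^ a') by exists y.
  move/(proj2 (Hc' _)) => [al Al e].
  rewrite -(conjgK a' y) e.
  by apply: (fixJ Hm); [apply: (fixJ Hm) => //; apply: vA | apply: (fixV Hm); apply: vA].
set g0 := bb * a^-1.
have HBconj : forall y, B y -> exists2 al, A al & y = al ^ g0.
  move=> y By; have : conj_set B a (y ^ a) by exists y.
  move/(proj1 (Hconj _)) => [al Al e].
  by exists al => //; rewrite /g0 conjgM -e conjgK.
have T2 : forall z, Y z -> exists2 w, X w & z = act w g0.
  move=> z Yz; case: (transport Hm (H:=B) (K:=A) (g:=1) (h:=g0) _ Yz).
    move=> x Bx; case: (HBconj x Bx) => al Al e; exists al => //.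
    by rewrite conjg1.
  by move=> w Xw e; exists w => //; rewrite -e H1.
set be := a ^ g0.
have Bbe : B be.
  have : conj_set A bb (a ^ bb) by exists a.
  move/(proj2 (Hconj _)) => [y By e].
  by rewrite /be /g0 conjgM e conjgK.
have be1 : be <> 1.
  by move=> e; apply: a1; rewrite -(conjgK g0 a) -/be e conj1g.
have beY : forall y, Y y -> act y be = y.
  by move=> y /T2 [w Xw ->]; rewrite (act_conj Hm) HaX.
have beQ : forall v, CB (vcomm act v be).
  move=> v; rewrite -{1}(actVK Hm v g0) (vcomm_conj Hm) => g Bg.
  case: (HBconj g Bg) => al Al ->.
  by rewrite (act_conj Hm) (HaQ _ al Al).
have S1 : forall w, CA w -> Y w -> w = 0%R.
  by move=> w CAw Yw; apply: (G2 be Bbe be1 w (beY w Yw)).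
have S2 : forall w, X w -> CB w -> w = 0%R.
  by move=> w Xw CBw; apply: G1 => //; apply: HaX.
have T1 : forall x, X x -> exists2 y, Y y & act x bb = act y a.
  move=> x Xx; apply: (transport Hm (H:=A) (K:=B)) => // al Al.
  have : conj_set A bb (al ^ bb) by exists al.
  by move/(proj2 (Hconj _)) => [y By e]; exists y.
have S3 : forall x, X x -> exists c y, [/\ CA c, Y y & x = (c + y)%R].
  move=> x Xx; case: (T1 x Xx) => y Yy e.
  exists (vcomm act y a), (y - vcomm act x bb)%R; split.
  - exact: HaQ.
  - by case: YB => _; apply => //; apply: VComm_gen.
  - transitivity (act x bb - vcomm act x bb)%R.
      by rewrite /vcomm (addrC (- x)) opprD addrA subrr add0r opprK.
    by rewrite e vcommE rearr.
case: (Hba be Bbe be1) => al1 [Aal1 _ Hc1].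
have T3 : forall y, Y y -> exists2 x, X x & act y al1 = act x be.
  move=> y Yy; apply: (transport Hm (H:=B) (K:=A)) => // y0 By0.
  have : conj_set B al1 (y0 ^ al1) by exists y0.
  by move/(proj2 (Hc1 _)) => [al Al e]; exists al.
have S4 : forall y, Y y -> exists d x, [/\ CB d, X x & y = (d + x)%R].
  move=> y Yy; case: (T3 y Yy) => x Xx e.
  exists (vcomm act x be), (x - vcomm act y al1)%R; split.
  - exact: beQ.
  - by case: XB => _; apply => //; apply: VComm_gen.
  - transitivity (act y al1 - vcomm act y al1)%R.
      by rewrite /vcomm (addrC (- y)) opprD addrA subrr add0r opprK.
    by rewrite e vcommE rearr.
have S5 : forall y, Y y -> act y a = y -> X y.
  move=> y Yy ya; case: (S4 y Yy) => d [x [CBd Xx ey]].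
  have da : act d a = d.
    have -> : d = (y - x)%R by rewrite ey addrK.
    by rewrite (actB Hm) ya HaX.
  have d0 : d = 0%R by apply: G1.
  by rewrite ey d0 add0r.
have S6 : forall v, X v -> Y v -> act v bb = v.
  move=> v Xv Yv; case: (T1 v Xv) => y Yy e.
  have vbY : Y (act v bb) by rewrite vcommE; apply: (@addsubD _ Y) => //; apply: VComm_gen.
  have ya0 : vcomm act y a = 0%R.
    apply: S1; first exact: HaQ.
    have -> : vcomm act y a = (act v bb - y)%R by rewrite e /vcomm addrC.
    by case: YB => _; apply.
  have ya : act y a = y by rewrite vcommE ya0 addr0.
  have yeq : act v bb = y by rewrite e ya.
  set u := vcomm act v bb.
  have Yu : Y u by apply: VComm_gen.
  have ua : act u a = u.
    by rewrite /u /vcomm; case: (Hm) => _ _ HD; rewrite HD (actN Hm) HaX // yeq ya.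
  have Xu : X u by apply: S5.
  have CBu : CB u.
    move=> g Bg; case: (T2 v Yv) => w Xw ev.
    case: (HBconj bb Bb) => al Al eb; case: (HBconj g Bg) => al' Al' eg.
    rewrite /u ev eb (vcomm_conj Hm) eg (act_conj Hm).
    have h := Hcub _ (VComm_gen (VComm_gen Xw Al) Al').
    rewrite /vcomm in h; move/eqP: h; rewrite addrC subr_eq0 => /eqP.
    by rewrite -/(vcomm act w al) => ->.
  have u0 : u = 0%R by apply: S2.
  by rewrite vcommE -/u u0 addr0.
have VXY : forall v, exists x y, [/\ X x, Y y & v = (x + y)%R].
  pose P v := exists x y, [/\ X x, Y y & v = (x + y)%R].
  have P0 : P 0%R by exists 0%R, 0%R; split; [exact: (proj1 XB) | exact: (proj1 YB) | rewrite addr0].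
  have PD : forall v w, P v -> P w -> P (v + w)%R.
    move=> v w [x [y [Xx Yy ->]]] [x' [y' [Xx' Yy' ->]]].
    exists (x + x')%R, (y + y')%R; split;
      [exact: (addsubD XB Xx Xx') | exact: (addsubD YB Yy Yy') | by rewrite addrACA].
  have PN : forall v, P v -> P (- v)%R.
    move=> v [x [y [Xx Yy ->]]]; exists (- x)%R, (- y)%R; split;
      [exact: (addsubN XB Xx) | exact: (addsubN YB Yy) | by rewrite opprD].
  have HG : forall g, forall v, P (vcomm act v g).
    move=> g; apply: (proj2 (Hgen g) I (fun g => forall v, P (vcomm act v g))).
    - split.
      + by move=> v; rewrite /vcomm H1 addNr.
      + move=> x y Hx Hy v.
        have -> : vcomm act v (x * y) = (vcomm act v x + vcomm act (act v x) y)%R.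
          by rewrite /vcomm addrA addrK; case: Hm => _ -> _.
        exact: PD.
      + move=> x Hx v.
        have -> : vcomm act v (x^-1)%g = (- vcomm act (act v (x^-1)%g) x)%R.
          by rewrite /vcomm (actVK Hm) opprD opprK addrC.
        exact: PN.
    - move=> s [As|Bs] v.
      + exists (vcomm act v s), 0%R; split; [exact: VComm_gen | exact: (proj1 YB) | by rewrite addr0].
      + exists 0%R, (vcomm act v s); split; [exact: (proj1 XB) | exact: VComm_gen | by rewrite add0r].
  move=> v; have : VComm act (allV V) (fun _ => True) v by apply: (proj2 (HVG v)).
  move=> /(_ P); apply; first by split; [exact: P0 | move=> x y Px Py; exact: PD _ _ Px (PN _ Py)].
  by move=> s [v' [g [_ _ ->]]]; apply: HG.
split.
- exact: S6.
- move=> v va vb.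
  case: (VXY v) => x [y [Xx Yy ev]]; case: (S3 x Xx) => c [y' [CAc Yy' ex]].
  have Yy2 : Y (y' + y)%R by exact: (addsubD YB).
  have ev2 : v = (c + (y' + y))%R by rewrite ev ex addrA.
  have y2a : act (y' + y)%R a = (y' + y)%R.
    have -> : (y' + y)%R = (v - c)%R by rewrite ev2 (addrC c) addrK.
    by rewrite (actB Hm) va CAc.
  have Xy2 : X (y' + y)%R by apply: S5.
  have y2b : act (y' + y)%R bb = (y' + y)%R by apply: S6.
  have c0 : c = 0%R.
    apply: (G2 bb Bb b1) => //.
    have -> : c = (v - (y' + y))%R by rewrite ev2 addrK.
    by rewrite (actB Hm) vb y2b.
  by rewrite ev2 c0 add0r.
- move=> w CAw.
  case: (VXY w) => x [y [Xx Yy ew]]; case: (S4 y Yy) => d [x' [CBd Xx' ey]].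
  have ew2 : w = ((x + x') + d)%R by rewrite ew ey (addrC d) addrA.
  have d0 : d = 0%R.
    apply: G1 => //.
    have -> : d = (w - (x + x'))%R by rewrite ew2 (addrC (x + x')%R) addrK.
    have Xs : X (x + x')%R by exact: (addsubD XB).
    by rewrite (actB Hm) CAw // HaX.
  by rewrite ew2 d0 addr0; exact: (addsubD XB).
- exact: S3.
- by move=> v CAv vb; apply: (G2 bb Bb b1).
Qed.
End Helpers.

Theorem lemma3p12 (gT : groupType) (V : zmodType) (act : V -> gT -> V)
    (A B : gT -> Prop) (b : gT -> gT) :
  rank_one A B b ->
  is_module act ->
  is_zero (VComm act (VComm act (VComm act (allV V) A) A) A) ->
  ~ is_zero (VComm act (VComm act (VComm act (allV V) (fun _ => True)) (fun _ => True)) (fun _ => True)) ->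
  set_eq (VComm act (allV V) (fun _ => True)) (allV V) ->
  is_zero (centV act (fun _ => True)) ->
  let A0 := fun g => centG act A (VComm act (allV V) A) g /\
                     centG_quo act A (centV act A) g in
  (exists2 a, A0 a & a <> 1%g) ->
  let B0 := fun y => y = 1%g \/ exists a, [/\ A0 a, a <> 1%g & y = b a] in
  let G0 := gen (fun g => A0 g \/ B0 g) in
  set_eq (fun v => VComm act (allV V) A v /\ VComm act (allV V) B v)
         (centV act G0)
  /\
  (set_eq (VComm act (allV V) A)
          (fun v => exists y z, [/\ centV act A y, centV act G0 z & v = (y + z)%R])
   /\ is_zero (fun v => centV act A v /\ centV act G0 v)).
Proof.
move=> HR Hm Hcub _ HVG Hcent A0 [a0 A0a0 a01] B0 G0.
have H1 : forall v, act v 1%g = v by case: Hm.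
have K : forall a, A0 a -> a <> 1%g -> _ :=
  fun a A0a a1 => key HR Hm Hcub HVG Hcent (proj1 (proj1 A0a)) a1
     (proj2 (proj1 A0a)) (proj2 (proj2 A0a)).
have XB := vgen_addsub (fun z => exists v g, [/\ allV V v, A g & z = vcomm act v g]).
have HG0a0 : G0 a0 by apply: gen_sub; left.
have HG0b0 : G0 (b a0) by apply: gen_sub; right; right; exists a0.
case: (K a0 A0a0 a01) => _ K2 K3 K4 K5.
have Ha : set_eq (fun v => VComm act (allV V) A v /\ VComm act (allV V) B v)
         (centV act G0).
  move=> v; split.
  - move=> [Xv Yv] g G0g; apply: (G0g (fun g => act v g = v)).
      exact: stab_subgroup.
    move=> s [A0s|[->|[a [A0a a1 ->]]]].
    + exact: (proj2 (proj1 A0s)).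
    + exact: H1.
    + by case: (K a A0a a1) => K1' _ _ _ _; apply: K1'.
  - move=> Cv; apply: K2; apply: Cv => //.
split=> //; split.
- move=> v; split.
  + move=> Xv; case: (K4 v Xv) => c [y [CAc Yy ev]].
    exists c, y; split => //.
    apply/(proj1 (Ha y)); split => //.
    have -> : y = (v - c)%R by rewrite ev (addrC c) addrK.
    by case: XB => _; apply => //; apply: K3.
  + move=> [y [z [CAy Cz ->]]].
    apply: (addsubD XB); first exact: K3.
    exact: (proj1 (proj2 (Ha z) Cz)).
- move=> v [CAv Cv]; apply: K5 => //; exact: Cv.
Qed.
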